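(* Let $m=p_1^{\alpha_1}p_2^{\alpha_2}$, where $p_1,p_2>2$ are distinct primes and $\alpha_1,\alpha_2$ are positive integers. Let $t=\mathrm{ord}_m(2)$ and let $\gamma\in\mathbb{F}_{2^t}^*$ be a primitive $m$th root of unity. Then $m$ is good if and only if there is a polynomial $Q(X)=X^u+aX^v+b\in\mathbb{F}_{2^t}[X]$ (with $u,v$ nonnegative integers, $a,b\in\mathbb{F}_{2^t}$) such that (1) $ab\neq 0$; (2) the three residues $u\bmod m$, $v\bmod m$, $0$ are pairwise distinct; and (3) $Q(\gamma)=Q(\gamma^{s_{01}})=Q(\gamma^{s_{10}})=0$ and $Q(1)\neq 0$.
   Context: $\mathrm{ord}_m(2)$ is the multiplicative order of $2$ modulo $m$. The canonical set of $m$ is $S_m=\{s_{01},s_{10},s_{11}\}\subseteq\mathbb{Z}_m$, where for $\sigma=(\sigma_1,\sigma_2)\in\{0,1\}^2\setminus\{(0,0)\}$, $s_\sigma$ is the unique element of $\mathbb{Z}_m$ with $s_\sigma\equiv\sigma_1 \pmod{p_1^{\alpha_1}}$ and $s_\sigma\equiv \sigma_2\pmod{p_2^{\alpha_2}}$ (so $s_{11}=1$). An $S_m$-decoding polynomial is a polynomial $P(X)\in\mathbb{F}_{2^t}[X]$ such that $P(\gamma^s)=0$ for every $s\in S_m$ and $P(1)=1$. The number $m$ is called good if there exists an $S_m$-decoding polynomial with fewer than $4$ monomials (nonzero terms). *)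

(* Defs.v *)
From HB Require Import structures.
From mathcomp Require Import all_boot all_order all_algebra all_field.
Set Implicit Arguments. Unset Strict Implicit. Unset Printing Implicit Defensive.
Import GRing.Theory.
Local Open Scope ring_scope.

(* Multiplicative order of a modulo m: the least n >= 1 (searched among
   1..m) with a^n = 1 (mod m).  For m > 1 and gcd(a,m) = 1 this is ord_m(a). *)
Definition ord_mod (m a : nat) : nat :=
  (find (fun n => (a ^ n.+1 %% m == 1 %% m)%N) (iota 0 m)).+1.

(* The canonical element s_sigma of Z_m (represented by its residue in
   [0, q1*q2)) with s = r1 mod q1 and s = r2 mod q2. *)
Definition crt_elt (q1 q2 r1 r2 : nat) : nat :=
  find (fun n => (n %% q1 == r1 %% q1) && (n %% q2 == r2 %% q2))%N
       (iota 0 (q1 * q2)).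

Definition s01 (q1 q2 : nat) : nat := crt_elt q1 q2 0 1.
Definition s10 (q1 q2 : nat) : nat := crt_elt q1 q2 1 0.

Definition nmonomials (F : nzRingType) (P : {poly F}) : nat :=
  count (fun c => c != 0) P.

(* P is an S_m-decoding polynomial, S_m = {s01, s10, s11 = 1}. *)
Definition decoding_poly (F : fieldType) (q1 q2 : nat) (gamma : F)
    (P : {poly F}) : Prop :=
  [/\ P.[gamma ^+ s01 q1 q2] = 0, P.[gamma ^+ s10 q1 q2] = 0,
      P.[gamma ^+ 1] = 0 & P.[1] = 1].

Definition good (F : fieldType) (q1 q2 : nat) (gamma : F) : Prop :=
  exists P : {poly F}, decoding_poly q1 q2 gamma P /\ (nmonomials P < 4)%N.

(* Main.v *)
Require Import Defs.
From HB Require Import structures.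
From mathcomp Require Import all_boot all_order all_algebra all_field.
Import GRing.Theory.
Local Open Scope ring_scope.
From mathcomp Require Import ring.

Lemma crt_spec q1 q2 r1 r2 : coprime q1 q2 -> (0 < q1)%N -> (0 < q2)%N ->
  (crt_elt q1 q2 r1 r2 %% q1 = r1 %% q1 /\ crt_elt q1 q2 r1 r2 %% q2 = r2 %% q2)%N.
Proof.
move=> co p1 p2; rewrite /crt_elt.
set a := (fun n => _).
have hh : has a (iota 0 (q1 * q2)).
  apply/hasP; exists (chinese q1 q2 r1 r2 %% (q1 * q2))%N.
    by rewrite mem_iota /= ltn_pmod // muln_gt0 p1.
  rewrite /a (modn_dvdm _ (dvdn_mulr q2 (dvdnn q1))) (modn_dvdm _ (dvdn_mull q1 (dvdnn q2))).
  by rewrite chinese_modl // chinese_modr // !eqxx.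
move: (nth_find 0%N hh); rewrite nth_iota ?add0n; last by move: hh; rewrite has_find size_iota.
by case/andP => /eqP -> /eqP ->.
Qed.

Lemma s_sum q1 q2 : coprime q1 q2 -> (0 < q1)%N -> (0 < q2)%N ->
  (s01 q1 q2 + s10 q1 q2 = 1 %[mod q1 * q2])%N.
Proof.
move=> co p1 p2; apply/eqP; rewrite chinese_remainder //.
have [h1 h2] := crt_spec q1 q2 0 1 co p1 p2.
have [h3 h4] := crt_spec q1 q2 1 0 co p1 p2.
rewrite /s01 /s10; apply/andP; split; apply/eqP.
  by rewrite -modnDm h1 h3 mod0n add0n modn_mod.
by rewrite -modnDm h2 h4 mod0n addn0 modn_mod.
Qed.

Lemma L2 (F : fieldType) (gamma : F) (m s1 s2 : nat) :
  (1 < m)%N -> gamma ^+ m = 1 -> (s1 + s2 = 1 %[mod m])%N ->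
  forall (c d : F) (e k : nat),
  c * gamma ^+ e + d * gamma ^+ k = 0 ->
  c * (gamma ^+ s1) ^+ e + d * (gamma ^+ s1) ^+ k = 0 ->
  c * (gamma ^+ s2) ^+ e + d * (gamma ^+ s2) ^+ k = 0 ->
  c + d = 0.
Proof.
move=> m1 gm hs c d e k E1 E2 E3.
have g0 : gamma != 0.
  apply/negP => /eqP g0; move: gm; rewrite g0 expr0n.
  by rewrite gtn_eqF ?(ltn_trans _ m1) // => /eqP; rewrite eq_sym oner_eq0.
set w := gamma ^+ e / gamma ^+ k.
have key : forall s, c * (gamma ^+ s) ^+ e + d * (gamma ^+ s) ^+ k = 0 ->
    c * w ^+ s + d = 0.
  move=> s Es.
  have z0 : (gamma ^+ k) ^+ s != 0 by rewrite !expf_neq0.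
  apply/eqP; rewrite -(mulIr_eq0 _ (mulIf z0)); apply/eqP.
  rewrite /w exprMn exprVn mulrDl -!mulrA mulVf // mulr1.
  by rewrite (exprAC gamma e s) (exprAC gamma k s).
have W1 := key 1%N; rewrite expr1 in W1; have {}W1 := W1 E1.
have W2 := key _ E2; have W3 := key _ E3.
have [c0|c0] := eqVneq c 0.
  by move: W1; rewrite c0 mul0r !add0r.
have w0 : w != 0 by rewrite /w mulf_neq0 ?invr_eq0 ?expf_neq0.
have ws : forall s, c * w ^+ s + d = 0 -> w ^+ s = w.
  move=> s Ws; apply: (mulfI c0); apply: (addIr d); by rewrite Ws W1.
have wm : w ^+ m = 1.
  by rewrite /w exprMn exprVn -!exprM mulnC exprM gm mulnC exprM gm !expr1n invr1 mulr1.
have : w ^+ s1 * w ^+ s2 = w.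
  by rewrite -exprD -(expr_mod _ wm) hs modn_small // expr1.
rewrite (ws _ W2) (ws _ W3) -{3}(mulr1 w) => /(mulfI w0) w1.
by move: W1; rewrite w1 mulr1.
Qed.

Arguments L2 {F gamma m s1 s2}.

Lemma L2P (F : fieldType) (gamma : F) (m s1 s2 : nat) :
  (1 < m)%N -> gamma ^+ m = 1 -> (s1 + s2 = 1 %[mod m])%N ->
  forall (P : {poly F}) (c d : F) (e k : nat),
  (forall x, x ^+ m = 1 -> P.[x] = c * x ^+ e + d * x ^+ k) ->
  P.[gamma] = 0 -> P.[gamma ^+ s1] = 0 -> P.[gamma ^+ s2] = 0 -> P.[1] = 0.
Proof.
move=> m1 gm hs P c d e k HP E1 E2 E3.
have gsm : forall s, (gamma ^+ s) ^+ m = 1 by move=> s; rewrite exprAC gm expr1n.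
rewrite HP ?expr1n ?mulr1 //.
apply: (L2 m1 gm hs _ _ e k).
- by rewrite -HP.
- by rewrite -HP.
- by rewrite -HP.
Qed.

Arguments L2P {F gamma m s1 s2}.

Lemma supp_horner (F : fieldType) (P : {poly F}) x :
  P.[x] = \sum_(i <- [seq i <- iota 0 (size P) | P`_i != 0]) P`_i * x ^+ i.
Proof.
rewrite big_filter big_mkcond horner_coef -(big_mkord xpredT (fun i => P`_i * x ^+ i)) /index_iota subn0.
by apply: eq_bigr => i _; case: eqP => // ->; rewrite mul0r.
Qed.

Lemma nmon_count (F : fieldType) (P : {poly F}) :
  nmonomials P = size [seq i <- iota 0 (size P) | P`_i != 0].
Proof.
by rewrite /nmonomials size_filter -{1}(mkseq_nth 0 P) /mkseq count_map.
Qed.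

Lemma nmon_le (F : fieldType) (P : {poly F}) (t : seq nat) :
  (forall i, P`_i != 0 -> i \in t) -> (nmonomials P <= size t)%N.
Proof.
move=> H; rewrite nmon_count; apply: uniq_leq_size.
  by rewrite filter_uniq // iota_uniq.
by move=> i; rewrite mem_filter => /andP [/H].
Qed.

Arguments supp_horner {F}.
Arguments nmon_count {F}.
Arguments nmon_le {F}.

Theorem lemma4 (p1 p2 a1 a2 : nat) (F : finFieldType) (gamma : F) :
  prime p1 -> prime p2 -> (2 < p1)%N -> (2 < p2)%N -> p1 != p2 ->
  (0 < a1)%N -> (0 < a2)%N ->
  let q1 := (p1 ^ a1)%N in
  let q2 := (p2 ^ a2)%N in
  let m := (q1 * q2)%N in
  let t := ord_mod m 2 in
  #|F| = (2 ^ t)%N ->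
  m.-primitive_root gamma ->
  (good q1 q2 gamma <->
   exists (u v : nat) (a b : F),
     let Q := 'X^u + a *: 'X^v + b%:P in
     [/\ a * b != 0,
         [/\ (u %% m != v %% m)%N, (u %% m != 0)%N & (v %% m != 0)%N]
       & [/\ Q.[gamma] = 0, Q.[gamma ^+ s01 q1 q2] = 0,
             Q.[gamma ^+ s10 q1 q2] = 0 & Q.[1] != 0]]).
Proof.
move=> pr1 pr2 lt1 lt2 ne12 a1p a2p q1 q2 m t _ prim.
have co : coprime q1 q2.
  rewrite /q1 /q2 coprime_pexpl // coprime_sym coprime_pexpl //.
  by rewrite prime_coprime // dvdn_prime2 // eq_sym.
have q1p : (0 < q1)%N by rewrite expn_gt0 prime_gt0.
have q2p : (0 < q2)%N by rewrite expn_gt0 prime_gt0.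
have m1 : (1 < m)%N.
  apply: (leq_trans _ (leq_pmulr _ q2p)).
  apply: (leq_trans _ (ltn_expl a1 (ltn_trans (isT : (1 < 2)%N) lt1))).
  by [].
have gm : gamma ^+ m = 1 := prim_expr_order prim.
have hs : (s01 q1 q2 + s10 q1 q2 = 1 %[mod m])%N by apply: s_sum.
have g0 : gamma != 0.
  apply/negP => /eqP g0; move: gm; rewrite g0 expr0n.
  by rewrite gtn_eqF ?(ltn_trans _ m1) // => /eqP; rewrite eq_sym oner_eq0.
split.
- move=> [P [[E01 E10 E1 P1] Hn]]; rewrite expr1 in E1.
  have HS := supp_horner P.
  have sz := Hn; rewrite nmon_count in sz.
  have srt : sorted ltn [seq i <- iota 0 (size P) | P`_i != 0].
    by apply: sorted_filter; [exact: ltn_trans | exact: iota_ltn_sorted].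
  have nz := filter_all (fun i => P`_i != 0) (iota 0 (size P)).
  have oneP : P.[1] != 0 by rewrite P1 oner_eq0.
  move: HS sz srt nz.
  case: [seq _ <- _ | _] => [|i [|j [|k [|l s]]]] //= HS _ srt nz.
  + case/negP: oneP; apply/eqP.
    apply: (L2P m1 gm hs _ (0) (0)  0 0) => // x _.
    by rewrite HS big_nil mul0r addr0.
  + case/negP: oneP; apply/eqP.
    apply: (L2P m1 gm hs _ (P`_i) (0)  i 0) => // x _.
    by rewrite HS big_cons big_nil mul0r !addr0.
  + case/negP: oneP; apply/eqP.
    apply: (L2P m1 gm hs _ (P`_i) (P`_j)  i j) => // x _.
    by rewrite HS !big_cons big_nil addr0.
  + move: srt nz => /and3P [ij jk _] /and4P [ci cj ck _].
    have ik : (i < k)%N := ltn_trans ij jk.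
    have HS3 : forall x, P.[x] = P`_i * x ^+ i + P`_j * x ^+ j + P`_k * x ^+ k.
      by move=> x; rewrite HS !big_cons big_nil addr0 addrA.
    exists (k - i)%N, (j - i)%N, (P`_j / P`_k), (P`_i / P`_k).
    have modeq : forall a b, (a = b %[mod m])%N -> forall x : F, x ^+ m = 1 -> x ^+ a = x ^+ b.
      by move=> a b h x xm; rewrite -(expr_mod _ xm) h expr_mod.
    have Qid : forall x : F, P.[x] = P`_k * x ^+ i *
        ('X^(k - i) + (P`_j / P`_k) *: 'X^(j - i) + (P`_i / P`_k)%:P).[x].
      move=> x; rewrite HS3 !hornerE.
      have ej : x ^+ j = x ^+ (j - i) * x ^+ i by rewrite -exprD subnK // ltnW.
      have ek : x ^+ k = x ^+ (k - i) * x ^+ i by rewrite -exprD subnK // ltnW.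
      rewrite ej ek.
      by field.
    split.
    * by rewrite mulf_neq0 // mulf_neq0 ?invr_eq0.
    * split; apply/negP => /eqP h; case/negP: oneP; apply/eqP.
      -- have hkj : (k = j %[mod m])%N.
           by rewrite -(subnK (ltnW ik)) -(subnK (ltnW ij)) -modnDml h modnDml.
         apply: (L2P m1 gm hs _ (P`_j + P`_k) (P`_i)  j i) => // x xm.
         by rewrite HS3 (modeq _ _ hkj x xm); ring.
      -- have hkj : (k = i %[mod m])%N.
           by rewrite -(subnK (ltnW ik)) -modnDml h add0n.
         apply: (L2P m1 gm hs _ (P`_j) (P`_i + P`_k)  j i) => // x xm.
         by rewrite HS3 (modeq _ _ hkj x xm); ring.
      -- have hkj : (j = i %[mod m])%N.
           by rewrite -(subnK (ltnW ij)) -modnDml h add0n.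
         apply: (L2P m1 gm hs _ (P`_k) (P`_i + P`_j)  k i) => // x xm.
         by rewrite HS3 (modeq _ _ hkj x xm); ring.
    * have fac : forall x, x != 0 -> P.[x] = 0 -> ('X^(k - i) + (P`_j / P`_k) *: 'X^(j - i) + (P`_i / P`_k)%:P).[x] = 0.
        move=> x x0 Px; move/eqP: (Qid x); rewrite Px eq_sym mulf_eq0 => /orP [|/eqP //].
        by rewrite mulf_eq0 expf_eq0 (negbTE ck) (negbTE x0) andbF.
      split.
      -- exact: fac.
      -- by apply: fac; rewrite ?expf_neq0.
      -- by apply: fac; rewrite ?expf_neq0.
      -- apply/negP => /eqP Q0; case/negP: oneP; by rewrite Qid Q0 mulr0.
- move=> [u [v [a [b /= [ab0 _ [Q1 Q01 Q10 Q11]]]]]].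
  set Q := 'X^u + a *: 'X^v + b%:P in Q1 Q01 Q10 Q11 *.
  exists ((Q.[1])^-1 *: Q); split.
  + split; rewrite ?hornerZ ?expr1 ?Q1 ?Q01 ?Q10 ?mulr0 //.
    by rewrite mulVf.
  + apply: (@leq_ltn_trans 3); last by [].
    apply: (nmon_le _ [:: u; v; 0%N]) => i; apply: contraR.
    rewrite !inE => /norP [iu /norP [iv i0]].
    rewrite /Q coefZ !coefD coefZ coefXn coefXn coefC (negbTE iu) (negbTE iv) (negbTE i0).
    by rewrite mulr0 add0r addr0 mulr0.
Qed.
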